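(* Let $n\geq 1$ be an integer and $p$ a prime number. Let $\phi(x)\in \mathbb{Z}[x]$ be a monic polynomial which is irreducible modulo $p$. Let $a_0(x), a_1(x), \dots, a_{n-1}(x)\in \mathbb{Z}[x]$ each have degree less than $\deg \phi(x)$. Let $a_n$ be an integer with $p\nmid a_n$, and let $b_0, b_1, \dots, b_{n-1}$ be integers with $p\mid b_j$ for each $0\leq j\leq n-1$. Then the polynomial $$F(x)= a_{n}\phi(x)^{2n}+\sum_{j=0}^{n-1}b_j a_j(x)\phi(x)^{2j}$$ has no non-constant factor (in $\mathbb{Z}[x]$) of degree less than $\deg \phi(x)$.
   Context: A polynomial in $\mathbb{Z}[x]$ is irreducible modulo a prime $p$ if its reduction modulo $p$ is irreducible in $(\mathbb{Z}/p\mathbb{Z})[x]$. *)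

(* Defs.v *)
From HB Require Import structures.
From mathcomp Require Import all_boot all_order all_algebra.
Set Implicit Arguments. Unset Strict Implicit. Unset Printing Implicit Defensive.
Import Order.TTheory GRing.Theory Num.Theory.
Local Open Scope ring_scope.

Definition redp (p : nat) (f : {poly int}) : {poly 'F_p} :=
  map_poly (fun z : int => z%:~R) f.

Definition irreducible_mod (p : nat) (f : {poly int}) : Prop :=
  irreducible_poly (redp p f).

(* Main.v *)
Require Import Defs.
From HB Require Import structures.
From mathcomp Require Import all_boot all_order all_algebra.
From mathcomp Require Import zify.
Import Order.TTheory GRing.Theory Num.Theory.
Local Open Scope ring_scope.

Theorem lemma2p3 (n p : nat) (phi : {poly int}) (a : nat -> {poly int})
  (an : int) (b : nat -> int) :
  (1 <= n)%N -> prime p ->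
  phi \is monic -> irreducible_mod p phi ->
  (forall j, (j < n)%N -> (size (a j) < size phi)%N) ->
  ~~ (p%:Z %| an)%Z ->
  (forall j, (j < n)%N -> (p%:Z %| b j)%Z) ->
  ~ exists g h : {poly int},
      [/\ (1 < size g)%N, (size g < size phi)%N &
          an%:P * phi ^+ (2 * n) + \sum_(j < n) (b j)%:P * a j * phi ^+ (2 * j)
          = g * h].
Proof.
move=> n1 pp mon irr sa ndan db [g [h [sg1 sgphi E]]].
have chp := pchar_Fp pp.
have dv (z : int) : (p%:Z %| z)%Z = (z%:~R == 0 :> 'F_p) by rewrite (dvdz_pcharf chp).
have an0 : an != 0 by apply: contraNneq ndan => ->; rewrite dvdz0.
have phi0 : phi != 0 by apply: monic_neq0.
have lcphi : lead_coef phi = 1 by apply/monicP.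
have sphi : size phi = ((size phi).-1).+1 by rewrite prednK // size_poly_gt0.
set m := (size phi).-1 in sphi.
have sP : size (an%:P * phi ^+ (2 * n)) = (m * (2 * n)).+1.
  by rewrite size_Cmul // -[LHS]prednK ?size_poly_gt0 ?expf_neq0 // size_exp.
have sS : (size (\sum_(j < n) (b j)%:P * a j * phi ^+ (2 * j))%R < (m * (2 * n)).+1)%N.
  apply: (big_ind (fun x : {poly int} => (size x < (m * (2 * n)).+1)%N)).
  - by rewrite size_poly0.
  - by move=> x y Hx Hy; apply: leq_ltn_trans (size_polyD _ _) _; rewrite gtn_max Hx Hy.
  move=> [j jn] _ /=.
  apply: leq_ltn_trans (size_polyMleq _ _) _.
  have h1 := size_poly_exp_leq phi (2 * j).
  have h2 : (size ((b j)%:P * a j)%R <= m)%N.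
    rewrite mul_polyC; apply: leq_trans (size_scale_leq _ _) _.
    by have := sa j jn; rewrite sphi ltnS.
  rewrite -/m in h1; have jn' : (j < n)%N := jn.
  move: h1 h2 jn'; set s1 := size _; set s2 := size _ => h1 h2 jn'.
  nia.
have lcF : lead_coef (g * h) = an.
  rewrite -E lead_coefDl; last by rewrite sP.
  by rewrite lead_coefM lead_coefC (monicP (monic_exp _ mon)) mulr1.
have redF : redp p (g * h) = an%:~R *: redp p phi ^+ (2 * n).
  rewrite -E /redp rmorphD rmorph_sum /= big1 ?addr0.
    by rewrite rmorphM rmorphXn /= map_polyC /= mul_polyC.
  move=> [j jn] _ /=; rewrite !rmorphM /= map_polyC /=.
  by have := db j jn; rewrite dv => /eqP ->; rewrite mul0r mul0r.
set gb := redp p g; set pb := redp p phi.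
have spb : size pb = size phi.
  by rewrite /pb /redp size_map_poly_id0 // lcphi oner_neq0.
have an0' : (an%:~R : 'F_p) != 0 by rewrite -dv.
have pb0 : pb != 0 by apply: irredp_neq0.
have Fb0 : redp p (g * h) != 0 by rewrite redF scale_poly_eq0 negb_or an0' expf_neq0.
have gbdF : gb %| redp p (g * h) by rewrite /gb /redp rmorphM dvdp_mulIl.
have gb0 : gb != 0.
  by apply/negP => /eqP gb0; move: gbdF; rewrite gb0 dvd0p; apply/negP.
have sgb : (size gb <= size g)%N by rewrite /gb /redp /map_poly size_poly.
have cop : coprimep gb pb.
  rewrite coprimep_def; apply/negPn/negP => H.
  have := irr.2 _ H (dvdp_gcdr _ _) => Heq.
  have : pb %| gb by rewrite -(eqp_dvdl _ Heq) dvdp_gcdl.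
  move/(dvdp_leq gb0); rewrite spb; move=> H2.
  by move: (leq_trans H2 sgb); rewrite leqNgt sgphi.
have cop2 : coprimep gb (pb ^+ (2 * n)) by apply: coprimep_expr.
have d2 : gb %| pb ^+ (2 * n) by rewrite -(dvdpZr _ _ an0') -redF.
have : gb %| gcdp gb (pb ^+ (2 * n)) by rewrite dvdp_gcd dvdpp d2.
have gn0 : gcdp gb (pb ^+ (2 * n)) != 0 by rewrite gcdp_eq0 negb_and gb0.
move/(dvdp_leq gn0) => Hs.
move: cop2; rewrite coprimep_def => /eqP Hg; rewrite Hg in Hs.
have : gb`_(size g).-1 = 0 by apply: nth_default; apply: leq_trans Hs _; rewrite -ltnS prednK // ltnW.
rewrite /gb /redp coef_map /= -/(lead_coef g) => /eqP.
rewrite -dv => dg.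
move: ndan; rewrite -lcF lead_coefM.
by rewrite dvdz_mulr.
Qed.
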